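(* Let $H$ be a dephased complex Hadamard matrix of order $6$. If some row of $H$ other than the first (respectively, some column other than the first) contains three entries equal to the same number $x$, then $x\in\{1,-1\}$ and that row (respectively column) is, up to permutation of its entries, equal to $(1,1,1,-1,-1,-1)$.
   Context: A complex Hadamard matrix of order $n$ is an $n\times n$ complex matrix $H$ all of whose entries have modulus $1$ and which satisfies $HH^\ast=nI_n$. It is dephased if all entries of its first row and first column equal $1$. *)

(* Defs.v *)
(* Complex numbers are modelled by an arbitrary
   numClosedFieldType C (e.g. algC). *)
From HB Require Import structures.
From mathcomp Require Import all_boot all_order all_algebra.
Set Implicit Arguments. Unset Strict Implicit. Unset Printing Implicit Defensive.
Import Order.TTheory GRing.Theory Num.Theory.
Local Open Scope ring_scope.

Definition adjmx (C : numClosedFieldType) (m n : nat) (H : 'M[C]_(m, n)) : 'M[C]_(n, m) :=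
  (map_mx Num.conj H)^T.

Definition complex_hadamard (C : numClosedFieldType) (n : nat) (H : 'M[C]_n) : Prop :=
  (forall i j, `|H i j| = 1) /\ H *m adjmx H = n%:R%:M.

Definition dephased (C : numClosedFieldType) (n : nat) (H : 'M[C]_n.+1) : Prop :=
  (forall j, H ord0 j = 1) /\ (forall i, H i ord0 = 1).

(* Main.v *)
Require Import Defs.
From HB Require Import structures.
From mathcomp Require Import all_boot all_order all_algebra.
From mathcomp Require Import ring.
Import Order.TTheory GRing.Theory Num.Theory.
Local Open Scope ring_scope.
Lemma cc (T : finType) (A : pred T) : count A (enum T) = #|A|.
Proof. rewrite cardE -size_filter; congr size. by rewrite /(enum T) /(enum A) /= /enum_mem filter_predT. Qed.

Lemma core (C : numClosedFieldType) (f : 'I_6 -> C) (x : C) :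
  (forall j, `|f j| = 1) -> \sum_j f j = 0 -> f ord0 = 1 ->
  (3 <= #|[pred j | f j == x]|)%N ->
  (x = 1 \/ x = -1) /\
  perm_eq [seq f j | j <- enum 'I_6] [:: 1; 1; 1; -1; -1; -1].
Proof.
move=> nf sf f0 cS.
have [j0 Sj0] : exists j, f j == x.
  have : (0 < #|[pred j | f j == x]|)%N by apply: leq_trans cS.
  by case/card_gt0P => j; exists j.
have nx : `|x| = 1 by rewrite -(eqP Sj0).
have sumx : \sum_j `|f j + x| ^+ 2 = 12.
  have e j : `|f j + x| ^+ 2 = 2 + f j * x^* + x * (f j)^*.
    rewrite normCK rmorphD /= mulrDl !mulrDr.
    have h1 : f j * (f j)^* = 1 by rewrite -normCK nf expr1n.
    have h2 : x * x^* = 1 by rewrite -normCK nx expr1n.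
    rewrite h1 h2; ring.
  rewrite (eq_bigr _ (fun j _ => e j)).
  rewrite !big_split /= -mulr_suml -mulr_sumr -rmorph_sum sf rmorph0 mul0r mulr0 !addr0.
  by rewrite sumr_const card_ord -natrD.
rewrite (bigID (fun j => f j == x)) /= in sumx.
have e1 : \sum_(j | f j == x) `|f j + x| ^+ 2 = 4 *+ #|[pred j | f j == x]|.
  rewrite -sumr_const; apply: eq_bigr => j /eqP ->.
  by rewrite -mulr2n normrMn nx -natrX.
rewrite e1 in sumx.
set R := \sum_(j | f j != x) _ in sumx.
have R0 : 0 <= R by apply: sumr_ge0 => j _; exact: exprn_ge0.
have k3 : #|[pred j | f j == x]| = 3.
  apply/eqP; rewrite eqn_leq cS andbT.
  have : 4 *+ #|[pred j | f j == x]| <= 12 :> C by rewrite -sumx lerDl.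
  rewrite -mulr_natr -natrM (ler_nat C (4 * _) 12) => h.
  by rewrite -(leq_pmul2l (isT : (0 < 4)%N)).
rewrite k3 in sumx.
have Rz : R = 0.
  have e3 : 4 *+ 3 = 12 :> C by rewrite -mulr_natr -natrM.
  move: sumx; rewrite e3 addrC => /(congr1 (fun y => y - 12)); by rewrite addrK subrr.
have fo j : f j != x -> f j = - x.
  move=> hj; apply/eqP; rewrite -addr_eq0 -normr_eq0 -sqrf_eq0.
  apply/eqP; exact: (psumr_eq0P (fun i _ => exprn_ge0 2 (normr_ge0 _)) Rz hj).
have hx : x = 1 \/ x = -1.
  case: (boolP (f ord0 == x)) => [/eqP <-|/fo h]; first by left.
  by right; rewrite -[x]opprK -h f0.
set s := [seq f j | j <- enum 'I_6].
have c1 : count (pred1 x) s = 3.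
  rewrite count_map cc -k3; exact: eq_card.
have c2 : count (predC (pred1 x)) s = 3.
  have := count_predC (pred1 x) s; rewrite c1 size_map size_enum_ord.
  by move=> /(congr1 (subn^~ 3)); rewrite addKn.
have hs1 : filter (pred1 x) s = nseq 3 x.
  have /all_pred1P -> : all (pred1 x) (filter (pred1 x) s).
    by apply/allP => y; rewrite mem_filter => /andP[].
  by rewrite size_filter c1.
have hs2 : filter (predC (pred1 x)) s = nseq 3 (-x).
  have /all_pred1P -> : all (pred1 (-x)) (filter (predC (pred1 x)) s).
    apply/allP => y; rewrite mem_filter => /andP[/= hy /mapP[j _ E]] /=.
    by rewrite E fo // -E.
  by rewrite size_filter c2.
split => //.
rewrite -(perm_filterC (pred1 x) s) hs1 hs2.
case: hx => ->; first by [].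
by rewrite opprK perm_catC.
Qed.

Theorem lemma2p22 (C : numClosedFieldType) (H : 'M[C]_6) :
  complex_hadamard H -> dephased H ->
  (forall (i : 'I_6) (x : C), i != ord0 ->
     (3 <= #|[pred j | H i j == x]|)%N ->
     (x = 1 \/ x = -1) /\
     perm_eq [seq H i j | j <- enum 'I_6] [:: 1; 1; 1; -1; -1; -1]) /\
  (forall (j : 'I_6) (x : C), j != ord0 ->
     (3 <= #|[pred i | H i j == x]|)%N ->
     (x = 1 \/ x = -1) /\
     perm_eq [seq H i j | i <- enum 'I_6] [:: 1; 1; 1; -1; -1; -1]).
Proof.
move=> [hn hH] [hr hc].
have n6 : (6%:R : C) != 0 by rewrite pnatr_eq0.
split=> [i x hi h3 | j x hj h3].
  apply: core => //.
  have := congr1 (fun M : 'M[C]_6 => M i ord0) hH; rewrite !mxE (negbTE hi) mulr0n => E; apply: (etrans _ E).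
  by apply: eq_bigr => j _; rewrite !mxE hr rmorph1 mulr1.
apply: (@core C (fun i => H i j)) => //.
have e1 : H *m ((6%:R)^-1 *: adjmx H) = 1%:M.
  by rewrite -scalemxAr hH scale_scalar_mx mulVf.
have := congr1 (fun M : 'M[C]_6 => M ord0 j) (mulmx1C e1).
rewrite -scalemxAl !mxE eq_sym (negbTE hj) mulr0n => /eqP.
rewrite mulf_eq0 invr_eq0 (negbTE n6) /= => /eqP E; apply: (etrans _ E).
by apply: eq_bigr => i _; rewrite !mxE hc rmorph1 mul1r.
Qed.
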